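(* Assume (H1)–(H4) and the data below. Let $d_1\ge d_0$, where $d_0$ is such that for all $d_1\ge d_0$ the function $\underline v^1$ below satisfies the sub-solution inequality of $(E_z)$ pointwise on $\mathbb R\times\mathbb R^N$ (such $d_0$ exists). Let $b>0$ be so small that $b\phi_0(x+z)$ satisfies $\int k(y-x)b\phi_0(y+z)dy-b\phi_0(x+z)+f(x+z,b\phi_0(x+z))b\phi_0(x+z)\ge0$ for all $x,z$, and let $M>0$ be such that $\underline v^1(t,x;z,T)\ge b$ whenever $M-2\delta_0\le x\cdot\xi+cT-ct\le M$ (for all $z,T$). For $z\in\mathbb R^N$, $T>0$ define $$\underline u(t,x)=\begin{cases}\max\{b\phi_0(x+z),\ \underline v^1(t,x;z,T)\}, & x\cdot\xi+cT-ct<M,\\ \underline v^1(t,x;z,T), & x\cdot\xi+cT-ct\ge M,\end{cases}$$ where $\underline v^1(t,x;z,T)=e^{-\mu(x\cdot\xi+cT-ct)}\phi(x+z)-d_1e^{-\mu_1(x\cdot\xi+cT-ct)}\phi_1(x+z)$. Then $\underline u$ is a sub-solution of $(E_z)$: for each $x$, $t\mapsto\underline u(t,x)$ is continuous and differentiable for a.e. $t$, and at every such $t$, $\partial_t\underline u(t,x)\le\int k(y-x)\underline u(t,y)dy-\underline u(t,x)+\underline u(t,x)f(x+z,\underline u(t,x))$.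
   Context: Setting: $N\ge1$, $S^{N-1}$ unit sphere, $e_i$ standard basis vectors. $k\in C^1(\mathbb R^N)$, $k(z)>0$ for $\|z\|<\delta_0$, $k(z)=0$ for $\|z\|\ge\delta_0$ (some $\delta_0>0$), $\int k=1$. $f:\mathbb R^N\times\mathbb R\to\mathbb R$ with $f(x+p_ie_i,u)=f(x,u)$ for given periods $p_i>0$. $(E_z)$: $\partial_tu=\int_{\mathbb R^N}k(y-x)u(t,y)dy-u(t,x)+u(t,x)f(x+z,u(t,x))$. $X_p$: continuous $p$-periodic functions with sup norm, $X_p^+$ nonnegative ones; $a_0(x)=f(x,0)$; $(\mathcal K_{\xi,\mu}v)(x)=\int e^{-\mu(y-x)\cdot\xi}k(y-x)v(y)dy$, $\mathcal K=\mathcal K_{\xi,0}$; $\lambda_0(\xi,\mu,a_0)=\sup\{\mathrm{Re}\lambda:\lambda\in\sigma(\mathcal K_{\xi,\mu}-I+a_0I)\}$ on $X_p$; $\lambda_0=\lambda_0(\xi,0,a_0)$. Principal eigenvalue: algebraically simple eigenvalue with eigenfunction in $X_p^+$, rest of spectrum has smaller real part. (H1) $f\in C^1(\mathbb R^N\times[0,\infty))$, $\sup_{x,u\ge0}\partial_uf<0$, $f(x,u)<0$ for $u$ large. (H2) $\lambda_0>0$. (H3) for all $\xi\in S^{N-1}$, $\mu\ge0$, $\lambda_0(\xi,\mu,a_0)$ is the principal eigenvalue of $\mathcal K_{\xi,\mu}-I+a_0I$. (H4) $f(x,u)=f(x,0)$ for $u\le0$. Known: for each $\xi$ there is $\mu^*(\xi)>0$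 with $c^*(\xi):=\inf_{\mu>0}\lambda_0(\xi,\mu,a_0)/\mu=\lambda_0(\xi,\mu^*(\xi),a_0)/\mu^*(\xi)<\lambda_0(\xi,\mu,a_0)/\mu$ for $\mu\in(0,\mu^*(\xi))$. Data: fix $\xi\in S^{N-1}$, $c>c^*(\xi)$, $\mu\in(0,\mu^*(\xi))$ with $\lambda_0(\xi,\mu,a_0)=c\mu$, and $\mu_1\in(\mu,\min\{2\mu,\mu^*(\xi)\})$ with $c^*(\xi)<\lambda_0(\xi,\mu_1,a_0)/\mu_1<c$. $\phi,\phi_1,\phi_0\in X_p^+$ are positive principal eigenfunctions of $\mathcal K_{\xi,\mu}-I+a_0I$, $\mathcal K_{\xi,\mu_1}-I+a_0I$, $\mathcal K-I+a_0I$ respectively, each with sup equal to $1$. *)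

(* Defs.v *)
From Stdlib Require Import Reals Lra ClassicalEpsilon.
Open Scope R_scope.

Fixpoint Rn (n : nat) : Type :=
  match n with O => unit | S m => (R * Rn m)%type end.

Fixpoint vzero (n : nat) : Rn n :=
  match n return Rn n with O => tt | S m => (0, vzero m) end.

Fixpoint vadd (n : nat) : Rn n -> Rn n -> Rn n :=
  match n return Rn n -> Rn n -> Rn n with
  | O => fun _ _ => tt
  | S m => fun x y => (fst x + fst y, vadd m (snd x) (snd y))
  end.

Fixpoint vscale (n : nat) (a : R) : Rn n -> Rn n :=
  match n return Rn n -> Rn n with
  | O => fun _ => tt
  | S m => fun x => (a * fst x, vscale m a (snd x))
  end.

Definition vsub (n : nat) (x y : Rn n) : Rn n := vadd n x (vscale n (-1) y).

Fixpoint dot (n : nat) : Rn n -> Rn n -> R :=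
  match n return Rn n -> Rn n -> R with
  | O => fun _ _ => 0
  | S m => fun x y => fst x * fst y + dot m (snd x) (snd y)
  end.

Definition vnorm (n : nat) (x : Rn n) : R := sqrt (dot n x x).

(* standard basis vector e_i, coordinates indexed 0 .. n-1 *)
Fixpoint vbasis (n i : nat) : Rn n :=
  match n return Rn n with
  | O => tt
  | S m => match i with O => (1, vzero m) | S j => (0, vbasis m j) end
  end.

Definition contRn (n : nat) (g : Rn n -> R) : Prop :=
  forall x eps, 0 < eps -> exists delta, 0 < delta /\
    forall y, vnorm n (vsub n y x) < delta -> Rabs (g y - g x) < eps.

Definition C1fun (n : nat) (g : Rn n -> R) : Prop :=
  exists dg : nat -> Rn n -> R,
    (forall i, (i < n)%nat -> contRn n (dg i)) /\
    (forall i x, (i < n)%nat ->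
       derivable_pt_lim (fun s => g (vadd n x (vscale n s (vbasis n i)))) 0 (dg i x)).

(* total 1-D Riemann integral (0 if not Riemann integrable) *)
Definition RInt (f : R -> R) (a b : R) : R :=
  match excluded_middle_informative (inhabited (Riemann_integrable f a b)) with
  | left H =>
      RiemannInt (proj1_sig (constructive_indefinite_description
                    (fun _ : Riemann_integrable f a b => True)
                    (match H with inhabits pr => ex_intro _ pr I end)))
  | right _ => 0
  end.

Fixpoint boxint (n : nat) : (Rn n -> R) -> Rn n -> R -> R :=
  match n return (Rn n -> R) -> Rn n -> R -> R with
  | O => fun g _ _ => g tt
  | S m => fun g c r =>
      RInt (fun y0 => boxint m (fun y' => g (y0, y')) (snd c) r) (fst c - r) (fst c + r)
  end.

Definition null_set (A : R -> Prop) : Prop :=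
  forall eps, 0 < eps -> exists a b : nat -> R,
    (forall j, a j <= b j) /\
    (forall t, A t -> exists j, a j < t < b j) /\
    (forall m, sum_f_R0 (fun j => b j - a j) m <= eps).

Definition is_glb (E : R -> Prop) (l : R) : Prop :=
  (forall r, E r -> l <= r) /\ (forall l', (forall r, E r -> l' <= r) -> l' <= l).

Definition periodic (N : nat) (p : nat -> R) (v : Rn N -> R) : Prop :=
  forall i x, (i < N)%nat -> v (vadd N x (vscale N (p i) (vbasis N i))) = v x.

Definition Xp (N : nat) (p : nat -> R) (v : Rn N -> R) : Prop :=
  contRn N v /\ periodic N p v.

(* (K_{xi,mu} v)(x) = \int e^{-mu (y-x).xi} k(y-x) v(y) dy ; supp k in the ball of radius delta0,
   so the integral over R^N equals the integral over the cube x + [-delta0,delta0]^N *)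
Definition Kop (N : nat) (k : Rn N -> R) (delta0 : R) (xi : Rn N) (mu : R)
  (v : Rn N -> R) (x : Rn N) : R :=
  boxint N (fun y => exp (- mu * dot N (vsub N y x) xi) * k (vsub N y x) * v y) x delta0.

Definition Lop (N : nat) (k : Rn N -> R) (delta0 : R) (a0 : Rn N -> R) (xi : Rn N) (mu : R)
  (v : Rn N -> R) (x : Rn N) : R :=
  Kop N k delta0 xi mu v x - v x + a0 x * v x.

(* alpha + i beta is in the spectrum of L on the complex space X_p + i X_p:
   L - (alpha + i beta) is not bijective (by the open mapping theorem bijective
   bounded operators have bounded inverse). Complex functions are pairs (u1,u2). *)
Definition in_spec (N : nat) (p : nat -> R) (k : Rn N -> R) (delta0 : R)
  (a0 : Rn N -> R) (xi : Rn N) (mu : R) (alpha beta : R) : Prop :=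
  let L := Lop N k delta0 a0 xi mu in
  ~ ( (forall g1 g2, Xp N p g1 -> Xp N p g2 ->
         exists u1 u2, Xp N p u1 /\ Xp N p u2 /\
           (forall x, L u1 x - alpha * u1 x + beta * u2 x = g1 x) /\
           (forall x, L u2 x - alpha * u2 x - beta * u1 x = g2 x))
      /\
      (forall u1 u2, Xp N p u1 -> Xp N p u2 ->
           (forall x, L u1 x - alpha * u1 x + beta * u2 x = 0) ->
           (forall x, L u2 x - alpha * u2 x - beta * u1 x = 0) ->
           forall x, u1 x = 0 /\ u2 x = 0) ).

Definition lambda0 (N : nat) (p : nat -> R) (k : Rn N -> R) (delta0 : R)
  (a0 : Rn N -> R) (xi : Rn N) (mu : R) : R :=
  epsilon (inhabits 0) (fun l => is_lub (fun r => exists beta, in_spec N p k delta0 a0 xi mu r beta) l).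

Fixpoint iterL (N : nat) (k : Rn N -> R) (delta0 : R) (a0 : Rn N -> R) (xi : Rn N) (mu lam : R)
  (j : nat) (v : Rn N -> R) : Rn N -> R :=
  match j with
  | O => v
  | S j' => fun x => Lop N k delta0 a0 xi mu (iterL N k delta0 a0 xi mu lam j' v) x
                      - lam * iterL N k delta0 a0 xi mu lam j' v x
  end.

(* lam (real) is the principal eigenvalue of K_{xi,mu} - I + a0 I on X_p:
   an eigenvalue with an eigenfunction in X_p^+, algebraically simple
   (generalized eigenspace one-dimensional), and every other point of the
   spectrum has real part < lam. *)
Definition principal_eigenvalue (N : nat) (p : nat -> R) (k : Rn N -> R) (delta0 : R)
  (a0 : Rn N -> R) (xi : Rn N) (mu lam : R) : Prop :=
  exists psi : Rn N -> R,
    Xp N p psi /\ (forall x, 0 <= psi x) /\ (exists x, psi x <> 0) /\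
    (forall x, Lop N k delta0 a0 xi mu psi x = lam * psi x) /\
    (forall v j, Xp N p v -> (forall x, iterL N k delta0 a0 xi mu lam j v x = 0) ->
       exists a, forall x, v x = a * psi x) /\
    (forall alpha beta, in_spec N p k delta0 a0 xi mu alpha beta ->
       (alpha, beta) <> (lam, 0) -> alpha < lam).

Definition Ez_rhs (N : nat) (k : Rn N -> R) (delta0 : R) (f : Rn N -> R -> R) (z : Rn N)
  (w : R -> Rn N -> R) (t : R) (x : Rn N) : R :=
  boxint N (fun y => k (vsub N y x) * w t y) x delta0 - w t x
  + w t x * f (vadd N x z) (w t x).

Definition subsolution (N : nat) (k : Rn N -> R) (delta0 : R) (f : Rn N -> R -> R) (z : Rn N)
  (w : R -> Rn N -> R) : Prop :=
  forall x,
    continuity (fun t => w t x) /\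
    null_set (fun t => ~ exists l, derivable_pt_lim (fun s => w s x) t l) /\
    (forall t l, derivable_pt_lim (fun s => w s x) t l -> l <= Ez_rhs N k delta0 f z w t x).

Definition svar (N : nat) (xi : Rn N) (c T t : R) (x : Rn N) : R := dot N x xi + c * T - c * t.

Definition v1 (N : nat) (xi : Rn N) (c mu mu1 d1 : R) (phi phi1 : Rn N -> R)
  (z : Rn N) (T t : R) (x : Rn N) : R :=
  exp (- mu * svar N xi c T t x) * phi (vadd N x z)
  - d1 * exp (- mu1 * svar N xi c T t x) * phi1 (vadd N x z).

Definition ulow (N : nat) (xi : Rn N) (c mu mu1 d1 b M : R) (phi phi1 phi0 : Rn N -> R)
  (z : Rn N) (T t : R) (x : Rn N) : R :=
  if Rlt_dec (svar N xi c T t x) M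
  then Rmax (b * phi0 (vadd N x z)) (v1 N xi c mu mu1 d1 phi phi1 z T t x)
  else v1 N xi c mu mu1 d1 phi phi1 z T t x.

(* Main.v *)
Require Import Defs.
From Stdlib Require Import Reals Lra Lia Classical ClassicalEpsilon FunctionalExtensionality.
From Coquelicot Require Coquelicot.
Open Scope R_scope.

Lemma vsub_pair m a v b w : vsub (S m) (a, v) (b, w) = (a + -1 * b, vsub m v w).
Proof. reflexivity. Qed.

Lemma dot_nonneg n x : 0 <= dot n x x.
Proof. induction n; simpl. lra. destruct x as [a v]; simpl. specialize (IHn v). nra. Qed.

Lemma vnorm_pair m a w : vnorm (S m) (a, w) = sqrt (a * a + dot m w w).
Proof. reflexivity. Qed.

Lemma vnorm_nonneg n x : 0 <= vnorm n x.
Proof. apply sqrt_pos. Qed.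

Lemma vnorm_fst m a w : Rabs a <= vnorm (S m) (a, w).
Proof. rewrite vnorm_pair. rewrite <- sqrt_Rsqr_abs. apply sqrt_le_1_alt.
 unfold Rsqr. pose proof (dot_nonneg m w). lra. Qed.

Lemma vnorm_snd m a w : vnorm m w <= vnorm (S m) (a, w).
Proof. rewrite vnorm_pair. unfold vnorm. apply sqrt_le_1_alt. nra. Qed.

Lemma vnorm_pair_le m a w : vnorm (S m) (a, w) <= Rabs a + vnorm m w.
Proof. rewrite vnorm_pair. unfold vnorm.
 pose proof (dot_nonneg m w) as H. pose proof (sqrt_pos (dot m w w)) as H1.
 pose proof (Rabs_pos a) as H2.
 rewrite <- (sqrt_Rsqr (Rabs a + sqrt (dot m w w))) by lra.
 apply sqrt_le_1_alt. unfold Rsqr.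
 assert (Rabs a * Rabs a = a * a) by (rewrite <- Rabs_mult; apply Rabs_right; nra).
 pose proof (sqrt_sqrt _ H). nra. Qed.

Lemma vnorm_pair0 m w : vnorm (S m) (0, w) = vnorm m w.
Proof. rewrite vnorm_pair. unfold vnorm. f_equal. ring. Qed.

Lemma vscale_zero n h : vscale n h (vzero n) = vzero n.
Proof. induction n; simpl. reflexivity. rewrite IHn. f_equal. ring. Qed.

Lemma vadd_zero n v : vadd n v (vzero n) = v.
Proof. induction n; simpl. destruct v; reflexivity. destruct v; simpl. rewrite IHn. f_equal. ring. Qed.

Lemma vsub_self n v : vsub n v v = vzero n.
Proof. unfold vsub. induction n; simpl. reflexivity. destruct v; simpl. rewrite IHn. f_equal. ring. Qed.

Lemma dot_zero n : dot n (vzero n) (vzero n) = 0.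
Proof. induction n; simpl. reflexivity. rewrite IHn. ring. Qed.

Lemma vnorm_self n v : vnorm n (vsub n v v) = 0.
Proof. unfold vnorm. rewrite vsub_self, dot_zero. apply sqrt_0. Qed.

Lemma vsub_trans n y z x : vsub n (vadd n y z) (vadd n x z) = vsub n y x.
Proof. unfold vsub. induction n; simpl. reflexivity. destruct y, z, x; simpl. rewrite IHn. f_equal. ring. Qed.

Lemma vsub_sub n y x y0 : vsub n (vsub n y x) (vsub n y0 x) = vsub n y y0.
Proof. unfold vsub. induction n; simpl. reflexivity. destruct y, x, y0; simpl. rewrite IHn. f_equal. ring. Qed.

Lemma dot_sub n y x w : dot n (vsub n y x) w = dot n y w - dot n x w.
Proof. unfold vsub. induction n; simpl. ring. destruct y, x, w; simpl. rewrite IHn. ring. Qed.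

Lemma CS n u w : Rabs (dot n u w) <= vnorm n u * vnorm n w.
Proof.
 unfold vnorm. induction n; simpl. rewrite Rabs_R0. nra.
 destruct u as [a u], w as [b w]; simpl.
 specialize (IHn u w).
 pose proof (dot_nonneg n u) as Hu. pose proof (dot_nonneg n w) as Hw.
 set (X := dot n u u) in *. set (Y := dot n w w) in *. set (D := dot n u w) in *.
 rewrite <- sqrt_mult by nra.
 rewrite <- (sqrt_Rsqr_abs (a*b + D)). apply sqrt_le_1_alt. unfold Rsqr.
 pose proof (sqrt_sqrt X Hu). pose proof (sqrt_sqrt Y Hw).
 pose proof (sqrt_pos X). pose proof (sqrt_pos Y).
 rewrite <- sqrt_mult in IHn by auto.
 assert (HD : D * D <= X * Y).
 { rewrite <- (sqrt_sqrt (X*Y)) by nra.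
   assert (Rabs D * Rabs D = D * D) by (rewrite <- Rabs_mult; apply Rabs_right; nra).
   pose proof (Rabs_pos D). nra. }
 assert (Habs: Rabs D <= sqrt X * sqrt Y) by (rewrite sqrt_mult in IHn; auto).
 assert (2 * (a * b * D) <= a*a*Y + b*b*X).
 { pose proof (Rabs_pos D).
   assert (a*b*D <= Rabs a * Rabs b * Rabs D).
   { rewrite <- !Rabs_mult. apply Rle_abs. }
   assert (Rabs a * Rabs b * Rabs D <= Rabs a * Rabs b * (sqrt X * sqrt Y)).
   { apply Rmult_le_compat_l. pose proof (Rabs_pos a); pose proof (Rabs_pos b); nra. auto. }
   assert (Ha2: Rabs a * Rabs a = a * a) by (rewrite <- Rabs_mult; apply Rabs_right; nra).
   assert (Hb2: Rabs b * Rabs b = b * b) by (rewrite <- Rabs_mult; apply Rabs_right; nra).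
   assert (0 <= (Rabs a * sqrt Y - Rabs b * sqrt X)^2) by (apply pow2_ge_0).
   nra. }
 nra.
Qed.


Lemma cpt_eps f x : continuity_pt f x -> forall eps, 0 < eps ->
  exists d, 0 < d /\ forall y, Rabs (y - x) < d -> Rabs (f y - f x) < eps.
Proof.
 intros H eps He. destruct (H eps He) as [d [Hd H1]]. exists d; split; auto.
 intros y Hy. destruct (Req_dec y x) as [->|Hne].
 - unfold Rminus; rewrite Rplus_opp_r, Rabs_R0; auto.
 - apply (H1 y). split. split; [exact I | auto]. simpl. unfold R_dist. auto.
Qed.

Lemma eps_cpt f x : (forall eps, 0 < eps ->
  exists d, 0 < d /\ forall y, Rabs (y - x) < d -> Rabs (f y - f x) < eps) -> continuity_pt f x.
Proof.
 intros H eps He. destruct (H eps He) as [d [Hd H1]]. exists d; split; auto.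
 intros y [_ Hy]. simpl in *. unfold R_dist in *. auto.
Qed.

Definition contAt n (g : Rn n -> R) x := forall eps, 0 < eps -> exists delta, 0 < delta /\
    forall y, vnorm n (vsub n y x) < delta -> Rabs (g y - g x) < eps.

Lemma contRn_At n g : contRn n g <-> forall x, contAt n g x.
Proof. unfold contRn, contAt; tauto. Qed.

Definition cont2 (F : R -> R -> R) a b := forall eps, 0 < eps -> exists d, 0 < d /\
  forall u v, Rabs (u - a) < d -> Rabs (v - b) < d -> Rabs (F u v - F a b) < eps.

Lemma contAt_F2 n g h F x : contAt n g x -> contAt n h x -> cont2 F (g x) (h x) ->
  contAt n (fun y => F (g y) (h y)) x.
Proof.
 intros Hg Hh HF eps He. destruct (HF eps He) as [d [Hd H1]].
 destruct (Hg d Hd) as [d1 [Hd1 H2]]. destruct (Hh d Hd) as [d2 [Hd2 H3]].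
 exists (Rmin d1 d2); split. apply Rmin_glb_lt; auto.
 intros y Hy. apply H1. apply H2. pose proof (Rmin_l d1 d2); lra. apply H3. pose proof (Rmin_r d1 d2); lra.
Qed.

Lemma cont2_plus a b : cont2 Rplus a b.
Proof. intros eps He. exists (eps/2); split. lra. intros u v H1 H2.
 replace (u + v - (a + b)) with ((u - a) + (v - b)) by ring.
 pose proof (Rabs_triang (u-a) (v-b)). lra. Qed.

Lemma cont2_minus a b : cont2 Rminus a b.
Proof. intros eps He. exists (eps/2); split. lra. intros u v H1 H2.
 replace (u - v - (a - b)) with ((u - a) + - (v - b)) by ring.
 pose proof (Rabs_triang (u-a) (-(v-b))). rewrite Rabs_Ropp in H. lra. Qed.

Lemma cont2_mult a b : cont2 Rmult a b.
Proof. intros eps He.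
 set (K := Rabs a + Rabs b + 1).
 assert (HK : 0 < K) by (unfold K; pose proof (Rabs_pos a); pose proof (Rabs_pos b); lra).
 exists (Rmin 1 (eps / (2 * K))); split.
 apply Rmin_glb_lt. lra. apply Rdiv_lt_0_compat; lra.
 intros u v H1 H2. pose proof (Rmin_l 1 (eps/(2*K))). pose proof (Rmin_r 1 (eps/(2*K))).
 set (d := Rmin 1 (eps / (2 * K))) in *.
 replace (u * v - a * b) with ((u - a) * v + a * (v - b)) by ring.
 eapply Rle_lt_trans. apply Rabs_triang. rewrite !Rabs_mult.
 assert (Rabs v <= Rabs b + 1).
 { replace v with ((v - b) + b) by ring. pose proof (Rabs_triang (v-b) b). lra. }
 assert (d * K <= eps / 2).
 { assert (Hdd: d <= eps/(2*K)) by lra. apply Rmult_le_compat_r with (r := K) in Hdd; [|lra].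
   replace (eps / (2 * K) * K) with (eps/2) in Hdd by (field; lra). lra. }
 pose proof (Rabs_pos (u-a)). pose proof (Rabs_pos (v-b)). pose proof (Rabs_pos a). pose proof (Rabs_pos v).
 assert (Rabs (u - a) * Rabs v <= d * (Rabs b + 1)) by (apply Rmult_le_compat; lra).
 assert (Rabs a * Rabs (v - b) <= Rabs a * d) by (apply Rmult_le_compat_l; lra).
 unfold K in *. nra.
Qed.

Lemma cont2_max a b : cont2 Rmax a b.
Proof. intros eps He. exists eps; split; auto. intros u v H1 H2.
 unfold Rmax. destruct (Rle_dec u v), (Rle_dec a b);
 apply Rabs_def1; apply Rabs_def2 in H1; apply Rabs_def2 in H2; lra. Qed.

Lemma contAt_comp n (psi : R -> R) g x : continuity_pt psi (g x) -> contAt n g x ->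
  contAt n (fun y => psi (g y)) x.
Proof. intros Hp Hg eps He. destruct (cpt_eps _ _ Hp eps He) as [d [Hd H1]].
 destruct (Hg d Hd) as [d1 [Hd1 H2]]. exists d1; split; auto. Qed.

Lemma contAt_const n r x : contAt n (fun _ => r) x.
Proof. intros eps He. exists 1; split. lra. intros. unfold Rminus; rewrite Rplus_opp_r, Rabs_R0; auto. Qed.

Lemma contAt_dot n w x : contAt n (fun y => dot n y w) x.
Proof. intros eps He. exists (eps / (vnorm n w + 1)). pose proof (vnorm_nonneg n w).
 split. apply Rdiv_lt_0_compat; lra.
 intros y Hy. rewrite <- dot_sub. eapply Rle_lt_trans. apply CS.
 pose proof (vnorm_nonneg n (vsub n y x)).
 apply Rle_lt_trans with (eps / (vnorm n w + 1) * vnorm n w).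
 apply Rmult_le_compat_r; lra.
 apply Rlt_le_trans with (eps / (vnorm n w + 1) * (vnorm n w + 1)).
 apply Rmult_lt_compat_l. apply Rdiv_lt_0_compat; lra. lra. right; field; lra.
Qed.

Lemma contAt_transl n g z x : contAt n g (vadd n x z) -> contAt n (fun y => g (vadd n y z)) x.
Proof. intros H eps He. destruct (H eps He) as [d [Hd H1]]. exists d; split; auto.
 intros y Hy. apply H1. rewrite vsub_trans. auto. Qed.

Lemma contAt_shift n g x0 x : contAt n g (vsub n x x0) -> contAt n (fun y => g (vsub n y x0)) x.
Proof. intros H eps He. destruct (H eps He) as [d [Hd H1]]. exists d; split; auto.
 intros y Hy. apply H1. rewrite vsub_sub. auto. Qed.

Lemma contAt_local n g h x d : 0 < d -> (forall y, vnorm n (vsub n y x) < d -> g y = h y) ->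
  contAt n h x -> contAt n g x.
Proof. intros Hd Heq H eps He. destruct (H eps He) as [d1 [Hd1 H1]].
 exists (Rmin d d1); split. apply Rmin_glb_lt; auto.
 intros y Hy. pose proof (Rmin_l d d1). pose proof (Rmin_r d d1).
 rewrite (Heq y) by lra. rewrite (Heq x). apply H1; lra. rewrite vnorm_self; auto. Qed.


Lemma deriv_ext f g x l : (forall s, f s = g s) -> derivable_pt_lim f x l -> derivable_pt_lim g x l.
Proof. intros He H eps Hep. destruct (H eps Hep) as [d Hd]. exists d. intros h Hh Hh2.
 rewrite <- !He. apply Hd; auto. Qed.

Lemma deriv_shift phi s l : derivable_pt_lim (fun h => phi (s + h)) 0 l -> derivable_pt_lim phi s l.
Proof. intros H eps Hep. destruct (H eps Hep) as [d Hd]. exists d. intros h Hh Hh2.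
 specialize (Hd h Hh Hh2). rewrite Rplus_0_l, Rplus_0_r in Hd. auto. Qed.

Lemma MVT_bound phi phi' a b B : (forall s, derivable_pt_lim phi s (phi' s)) ->
  (forall s, Rmin a b <= s <= Rmax a b -> Rabs (phi' s) <= B) ->
  Rabs (phi b - phi a) <= B * Rabs (b - a).
Proof.
 intros Hd HB. destruct (Rtotal_order a b) as [Hab|[Hab|Hab]].
 - destruct (MVT_cor2 phi phi' a b Hab (fun c _ => Hd c)) as [c [Hc1 Hc2]].
   rewrite Hc1, Rabs_mult. apply Rmult_le_compat_r. apply Rabs_pos. apply HB.
   rewrite Rmin_left, Rmax_right by lra. lra.
 - subst. unfold Rminus; rewrite !Rplus_opp_r, !Rabs_R0. lra.
 - destruct (MVT_cor2 phi phi' b a Hab (fun c _ => Hd c)) as [c [Hc1 Hc2]].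
   rewrite <- Rabs_Ropp. replace (- (phi b - phi a)) with (phi a - phi b) by ring.
   rewrite Hc1, Rabs_mult. rewrite <- (Rabs_Ropp (b - a)). replace (- (b-a)) with (a - b) by ring.
   apply Rmult_le_compat_r. apply Rabs_pos. apply HB.
   rewrite Rmin_right, Rmax_left by lra. lra.
Qed.

Lemma C1_cont n : forall (g : Rn n -> R) (dg : nat -> Rn n -> R),
  (forall i, (i < n)%nat -> contRn n (dg i)) ->
  (forall i x, (i < n)%nat ->
       derivable_pt_lim (fun s => g (vadd n x (vscale n s (vbasis n i)))) 0 (dg i x)) ->
  contRn n g.
Proof.
 induction n as [|m IH]; intros g dg Hc Hd.
 - intros x eps He. exists 1; split. lra. intros y _. destruct x, y.
   unfold Rminus; rewrite Rplus_opp_r, Rabs_R0; auto.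
 - intros [a0 v0] eps He.
   assert (Hg0 : contRn m (fun v => g (a0, v))).
   { apply (IH _ (fun j v => dg (S j) (a0, v))).
     - intros j Hj x e He'. destruct (Hc (S j) ltac:(lia) (a0, x) e He') as [d [Hd0 H1]].
       exists d; split; auto. intros y Hy. apply H1. rewrite vsub_pair.
       replace (a0 + -1 * a0) with 0 by ring. rewrite vnorm_pair0. auto.
     - intros j x Hj. specialize (Hd (S j) (a0, x) ltac:(lia)). simpl in Hd.
       eapply deriv_ext; [|exact Hd]. intros s. simpl. rewrite Rmult_0_r, Rplus_0_r. reflexivity. }
   destruct (Hg0 v0 (eps/2) ltac:(lra)) as [d1 [Hd1 H1]].
   destruct (Hc 0%nat ltac:(lia) (a0, v0) 1 ltac:(lra)) as [d2 [Hd2 H2]].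
   set (B := Rabs (dg 0%nat (a0, v0)) + 1).
   assert (HB : 0 < B) by (unfold B; pose proof (Rabs_pos (dg 0%nat (a0,v0))); lra).
   exists (Rmin (Rmin d1 d2) (eps / (2 * B))). split.
   { apply Rmin_glb_lt. apply Rmin_glb_lt; auto. apply Rdiv_lt_0_compat; lra. }
   intros [a v] Hy.
   pose proof (Rmin_l (Rmin d1 d2) (eps / (2 * B))). pose proof (Rmin_r (Rmin d1 d2) (eps / (2 * B))).
   pose proof (Rmin_l d1 d2). pose proof (Rmin_r d1 d2).
   set (dd := Rmin (Rmin d1 d2) (eps / (2 * B))) in *.
   rewrite vsub_pair in Hy.
   pose proof (vnorm_fst m (a + -1 * a0) (vsub m v v0)) as Hf.
   pose proof (vnorm_snd m (a + -1 * a0) (vsub m v v0)) as Hs.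
   assert (Hpart1 : Rabs (g (a0, v) - g (a0, v0)) < eps / 2) by (apply H1; lra).
   assert (Hpart2 : Rabs (g (a, v) - g (a0, v)) <= B * Rabs (a - a0)).
   { apply (MVT_bound (fun s => g (s, v)) (fun s => dg 0%nat (s, v))).
     - intros s. apply deriv_shift. specialize (Hd 0%nat (s, v) ltac:(lia)). simpl in Hd.
       eapply deriv_ext; [|exact Hd]. intros h. simpl. rewrite vscale_zero, vadd_zero, Rmult_1_r. reflexivity.
     - intros s Hs'. assert (Rabs (dg 0%nat (s, v) - dg 0%nat (a0, v0)) < 1).
       { apply H2. rewrite vsub_pair. apply Rle_lt_trans with (vnorm (S m) (a + -1 * a0, vsub m v v0)); [|lra].
         rewrite !vnorm_pair. apply sqrt_le_1_alt.
         assert ((s + -1 * a0) * (s + -1 * a0) <= (a + -1 * a0) * (a + -1 * a0)).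
         { unfold Rmin, Rmax in Hs'. destruct (Rle_dec a0 a); nra. }
         lra. }
       cbv beta. unfold B. match goal with H : Rabs (_ - _) < 1 |- _ => revert H end. generalize (Rabs_triang_inv (dg 0%nat (s, v)) (dg 0%nat (a0, v0))). clear. intros. lra. }
   replace (g (a, v) - g (a0, v0)) with ((g (a, v) - g (a0, v)) + (g (a0, v) - g (a0, v0))) by ring.
   eapply Rle_lt_trans. apply Rabs_triang.
   assert (B * Rabs (a - a0) < eps / 2).
   { replace (a - a0) with (a + -1 * a0) by ring.
     apply Rlt_le_trans with (B * (eps / (2 * B))). apply Rmult_lt_compat_l. lra. clearbody dd. eapply Rle_lt_trans; [exact Hf|]. eapply Rlt_le_trans; [exact Hy|exact H0].
     right; field; lra. }
   lra.
Qed.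


Lemma RInt_eq f a b (pr : Riemann_integrable f a b) : RInt f a b = RiemannInt pr.
Proof. unfold RInt. destruct (excluded_middle_informative _) as [Hi|Hn].
 - apply RiemannInt_P5.
 - exfalso. apply Hn. constructor. exact pr. Qed.

Lemma tube_local q (H : Rn (S q) -> R) p0 eps x0 : contRn (S q) H -> 0 < eps ->
  exists d, 0 < d /\ forall y1 p, Rabs (y1 - x0) < d -> vnorm q (vsub q p p0) < d ->
    Rabs (H (y1, p) - H (y1, p0)) < eps.
Proof.
 intros Hc He. destruct (Hc (x0, p0) (eps/2) ltac:(lra)) as [d [Hd H1]].
 exists (d/2); split. lra. intros y1 p Hy Hp.
 assert (A1 : Rabs (H (y1, p) - H (x0, p0)) < eps/2).
 { apply H1. rewrite vsub_pair. eapply Rle_lt_trans. apply vnorm_pair_le.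
   replace (y1 + -1 * x0) with (y1 - x0) by ring. lra. }
 assert (A2 : Rabs (H (y1, p0) - H (x0, p0)) < eps/2).
 { apply H1. rewrite vsub_pair. eapply Rle_lt_trans. apply vnorm_pair_le.
   rewrite vnorm_self. replace (y1 + -1 * x0) with (y1 - x0) by ring. lra. }
 replace (H (y1, p) - H (y1, p0)) with ((H (y1, p) - H (x0, p0)) + - (H (y1, p0) - H (x0, p0))) by ring.
 eapply Rle_lt_trans. apply Rabs_triang. rewrite Rabs_Ropp. lra.
Qed.

Lemma tube q (H : Rn (S q) -> R) a b p0 eps : contRn (S q) H -> a <= b -> 0 < eps ->
  exists d, 0 < d /\ forall y1 p, a <= y1 <= b -> vnorm q (vsub q p p0) < d ->
    Rabs (H (y1, p) - H (y1, p0)) < eps.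
Proof.
 intros Hc Hab He.
 set (P := fun x => exists d, 0 < d /\ forall y1 p, a <= y1 <= x -> vnorm q (vsub q p p0) < d ->
    Rabs (H (y1, p) - H (y1, p0)) < eps).
 set (E := fun x => a <= x <= b /\ P x).
 assert (Ea : E a).
 { split. lra. destruct (tube_local q H p0 eps a Hc He) as [d [Hd H1]].
   exists d; split; auto. intros y1 p Hy Hp. apply H1; auto.
   replace (y1 - a) with 0 by lra. rewrite Rabs_R0; auto. }
 assert (Hb : bound E) by (exists b; intros x [Hx _]; lra).
 destruct (completeness E Hb (ex_intro _ a Ea)) as [s [Hs1 Hs2]].
 assert (Has : a <= s) by (apply Hs1; auto).
 assert (Hsb : s <= b) by (apply Hs2; intros x [Hx _]; lra).
 destruct (tube_local q H p0 eps s Hc He) as [ds [Hds H1]].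
 assert (Hx : exists x, E x /\ s - ds < x).
 { apply NNPP. intro Hn. assert (s <= s - ds); [|lra].
   apply Hs2. intros x Ex. apply Rnot_lt_le. intro Hlt. apply Hn. exists x; auto. }
 destruct Hx as [x [[Hx1 [dx [Hdx H2]]] Hx2]].
 assert (Hx3 : x <= s) by (apply Hs1; split; auto; exists dx; auto).
 set (x' := Rmin (s + ds/2) b).
 assert (Ex' : E x').
 { split. split. unfold x'. apply Rmin_glb; lra. unfold x'; apply Rmin_r.
   exists (Rmin dx ds); split. apply Rmin_glb_lt; auto.
   intros y1 p Hy Hp. pose proof (Rmin_l dx ds). pose proof (Rmin_r dx ds).
   destruct (Rle_dec y1 x).
   - apply H2. lra. lra.
   - apply Rnot_le_lt in n. apply H1. assert (Hm : x' <= s + ds/2) by (unfold x'; apply Rmin_l).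
     apply Rabs_def1; lra. lra. }
 assert (Hx'b : x' = b).
 { assert (x' <= s) by (apply Hs1; auto). unfold x' in *.
   unfold Rmin in *. destruct (Rle_dec (s + ds/2) b); lra. }
 rewrite Hx'b in Ex'. destruct Ex' as [_ [d [Hd H3]]]. exists d; split; auto.
Qed.

Lemma section_cont q (H : Rn (S q) -> R) p y1 : contRn (S q) H ->
  continuity_pt (fun y => H (y, p)) y1.
Proof.
 intros Hc. apply eps_cpt. intros eps He. destruct (Hc (y1, p) eps He) as [d [Hd H1]].
 exists d; split; auto. intros y Hy. apply H1. rewrite vsub_pair.
 eapply Rle_lt_trans. apply vnorm_pair_le. rewrite vnorm_self.
 replace (y + -1 * y1) with (y - y1) by ring. lra.
Qed.

Lemma param_int q (H : Rn (S q) -> R) a b : contRn (S q) H -> a <= b ->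
  contRn q (fun p => RInt (fun y1 => H (y1, p)) a b).
Proof.
 intros Hc Hab p0 eps He.
 set (e' := eps / (b - a + 1)).
 assert (He' : 0 < e') by (unfold e'; apply Rdiv_lt_0_compat; lra).
 destruct (tube q H a b p0 e' Hc Hab He') as [d [Hd H1]].
 exists d; split; auto. intros p Hp.
 assert (I1 : Riemann_integrable (fun y1 => H (y1, p)) a b).
 { apply continuity_implies_RiemannInt; auto. intros; apply section_cont; auto. }
 assert (I0 : Riemann_integrable (fun y1 => H (y1, p0)) a b).
 { apply continuity_implies_RiemannInt; auto. intros; apply section_cont; auto. }
 pose proof (RiemannInt_P10 (-1) I1 I0) as I2.
 rewrite (RInt_eq _ _ _ I1), (RInt_eq _ _ _ I0).
 pose proof (RiemannInt_P13 I1 I0 I2) as E.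
 destruct (@RiemannInt_const_bound _ _ _ (-e') e' I2 Hab) as [B1 B2].
 { intros x Hx. specialize (H1 x p ltac:(lra) Hp). apply Rabs_def2 in H1. lra. }
 assert (e' * (b - a) < eps).
 { apply Rlt_le_trans with (e' * (b - a + 1)). apply Rmult_lt_compat_l; lra.
   unfold e'. right; field; lra. }
 apply Rabs_def1; lra.
Qed.

Definition jcont q m (g : Rn q -> Rn m -> R) := forall p0 y0 eps, 0 < eps ->
  exists d, 0 < d /\ forall p y, vnorm q (vsub q p p0) < d -> vnorm m (vsub m y y0) < d ->
    Rabs (g p y - g p0 y0) < eps.

Lemma claim m : forall q (g : Rn q -> Rn m -> R) c r, 0 <= r -> jcont q m g ->
  contRn q (fun p => boxint m (g p) c r).
Proof.
 induction m as [|m IH]; intros q g c r Hr Hj.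
 - intros p0 eps He. destruct (Hj p0 tt eps He) as [d [Hd H1]]. exists d; split; auto.
   intros p Hp. simpl. apply H1; auto. unfold vnorm; simpl. rewrite sqrt_0. auto.
 - set (g' := fun (pp : Rn (S q)) (y : Rn m) => g (snd pp) (fst pp, y)).
   assert (Hj' : jcont (S q) m g').
   { intros [y1 p0] y0 eps He. destruct (Hj p0 (y1, y0) eps He) as [d [Hd H1]].
     exists (d/2); split. lra. intros [y1' p] y Hp Hy. unfold g'; simpl.
     rewrite vsub_pair in Hp.
     assert (Ha : Rabs (y1' + -1 * y1) < d/2) by (eapply Rle_lt_trans; [apply vnorm_fst|exact Hp]).
     assert (Hb : vnorm q (vsub q p p0) < d/2) by (eapply Rle_lt_trans; [apply vnorm_snd|exact Hp]).
     apply H1. lra. rewrite vsub_pair. eapply Rle_lt_trans. apply vnorm_pair_le. lra. }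
   pose proof (IH (S q) g' (snd c) r Hr Hj') as Hc.
   pose proof (param_int q _ (fst c - r) (fst c + r) Hc ltac:(lra)) as HP.
   exact HP.
Qed.

Lemma mono m : forall (g h : Rn m -> R) c r, 0 <= r -> contRn m g -> contRn m h ->
  (forall y, g y <= h y) -> boxint m g c r <= boxint m h c r.
Proof.
 induction m as [|m IH]; intros g h c r Hr Hg Hh Hle.
 - simpl. apply Hle.
 - simpl.
   assert (Hsec : forall (g : Rn (S m) -> R) y0, contRn (S m) g -> contRn m (fun y => g (y0, y))).
   { intros g0 y0 Hg0 x eps He. destruct (Hg0 (y0, x) eps He) as [d [Hd H1]].
     exists d; split; auto. intros y Hy. apply H1. rewrite vsub_pair.
     replace (y0 + -1 * y0) with 0 by ring. rewrite vnorm_pair0. auto. }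
   assert (Hint : forall (g : Rn (S m) -> R), contRn (S m) g ->
     forall x, continuity_pt (fun y0 => boxint m (fun y => g (y0, y)) (snd c) r) x).
   { intros g0 Hg0 x.
     set (gq := fun (p : Rn 1) (y : Rn m) => g0 (fst p, y)).
     assert (Hj : jcont 1 m gq).
     { intros [p0 []] y0 eps He. destruct (Hg0 (p0, y0) eps He) as [d [Hd H1]].
       exists (d/2); split. lra. intros [p []] y Hp Hy. unfold gq; simpl.
       apply H1. rewrite vsub_pair. eapply Rle_lt_trans. apply vnorm_pair_le.
       rewrite vsub_pair in Hp. assert (Rabs (p + -1 * p0) < d/2) by (eapply Rle_lt_trans; [apply vnorm_fst|exact Hp]). lra. }
     pose proof (claim m 1 gq (snd c) r Hr Hj) as Hc.
     apply eps_cpt. intros eps He. destruct (Hc (x, tt) eps He) as [d [Hd H1]].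
     exists d; split; auto. intros y Hy. apply (H1 (y, tt)). rewrite vsub_pair.
     unfold vnorm. simpl. rewrite Rplus_0_r. rewrite <- sqrt_Rsqr_abs in Hy. unfold Rsqr in Hy.
     replace (y + -1 * x) with (y - x) by ring. auto. }
   assert (I1 : Riemann_integrable (fun y0 => boxint m (fun y => g (y0, y)) (snd c) r) (fst c - r) (fst c + r)).
   { apply continuity_implies_RiemannInt. lra. intros; apply Hint; auto. }
   assert (I2 : Riemann_integrable (fun y0 => boxint m (fun y => h (y0, y)) (snd c) r) (fst c - r) (fst c + r)).
   { apply continuity_implies_RiemannInt. lra. intros; apply Hint; auto. }
   rewrite (RInt_eq _ _ _ I1), (RInt_eq _ _ _ I2).
   apply RiemannInt_P19. lra. intros x _. apply IH; auto.
Qed.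


Lemma deriv_local f g t l : (exists d, 0 < d /\ forall s, Rabs (s - t) < d -> f s = g s) ->
  derivable_pt_lim g t l -> derivable_pt_lim f t l.
Proof.
 intros [d [Hd He]] H eps Hep. destruct (H eps Hep) as [d1 Hd1].
 assert (Hm : 0 < Rmin d (pos d1)) by (apply Rmin_glb_lt; auto; apply cond_pos).
 exists (mkposreal _ Hm). intros h Hh Hh2. simpl in Hh2.
 pose proof (Rmin_l d d1). pose proof (Rmin_r d d1).
 rewrite !He. apply Hd1; auto. lra.
 replace (t - t) with 0 by ring. rewrite Rabs_R0; auto.
 replace (t + h - t) with h by ring. lra.
Qed.

Lemma local_min_deriv f g t l lg : derivable_pt_lim f t l -> derivable_pt_lim g t lg ->
  f t = g t -> (exists d, 0 < d /\ forall s, Rabs (s - t) < d -> g s <= f s) -> l = lg.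
Proof.
 intros Hf Hg Heq [d [Hd Hle]].
 assert (H := derivable_pt_lim_minus f g t l lg Hf Hg).
 destruct (Rtotal_order (l - lg) 0) as [Hlt|[Hz|Hgt]]; [exfalso| lra | exfalso].
 - destruct (H (- (l - lg)) ltac:(lra)) as [d1 Hd1].
   set (h := Rmin (d/2) (d1/2)).
   assert (hp : 0 < h) by (unfold h; apply Rmin_glb_lt; [lra| pose proof (cond_pos d1); lra]).
   assert (h1 : h <= d/2) by apply Rmin_l. assert (h2 : h <= d1/2) by apply Rmin_r.
   specialize (Hd1 h ltac:(lra)). rewrite Rabs_right in Hd1 by lra.
   specialize (Hd1 ltac:(lra)). unfold minus_fct in Hd1.
   specialize (Hle (t + h)). rewrite Rabs_right in Hle by lra.
   specialize (Hle ltac:(lra)).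
   assert (0 <= (f (t + h) - g (t + h) - (f t - g t)) / h).
   { unfold Rdiv; apply Rmult_le_pos; [lra | left; apply Rinv_0_lt_compat; lra]. }
   apply Rabs_def2 in Hd1. lra.
 - destruct (H (l - lg) ltac:(lra)) as [d1 Hd1].
   set (h := Rmin (d/2) (d1/2)).
   assert (hp : 0 < h) by (unfold h; apply Rmin_glb_lt; [lra| pose proof (cond_pos d1); lra]).
   assert (h1 : h <= d/2) by apply Rmin_l. assert (h2 : h <= d1/2) by apply Rmin_r.
   specialize (Hd1 (-h) ltac:(lra)). rewrite Rabs_left in Hd1 by lra.
   specialize (Hd1 ltac:(lra)). unfold minus_fct in Hd1.
   specialize (Hle (t + - h)). rewrite Rabs_left in Hle by lra.
   specialize (Hle ltac:(lra)).
   assert ((f (t + - h) - g (t + - h) - (f t - g t)) / - h <= 0).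
   { unfold Rdiv. rewrite <- Ropp_inv_permute by lra.
     assert (0 <= (f (t + - h) - g (t + - h) - (f t - g t)) * / h).
     { apply Rmult_le_pos. lra. left; apply Rinv_0_lt_compat; lra. }
     lra. }
   apply Rabs_def2 in Hd1. lra.
Qed.

Lemma cpt_local f g t : (exists d, 0 < d /\ forall s, Rabs (s - t) < d -> f s = g s) ->
  continuity_pt g t -> continuity_pt f t.
Proof.
 intros [d [Hd He]] H. apply eps_cpt. intros eps Hep. destruct (cpt_eps _ _ H eps Hep) as [d1 [Hd1 H1]].
 exists (Rmin d d1); split. apply Rmin_glb_lt; auto. intros y Hy.
 pose proof (Rmin_l d d1). pose proof (Rmin_r d d1).
 rewrite !He. apply H1. lra. replace (t - t) with 0 by ring. rewrite Rabs_R0; auto. lra.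
Qed.

Lemma cpt_F2 g h F t : continuity_pt g t -> continuity_pt h t -> cont2 F (g t) (h t) ->
  continuity_pt (fun s => F (g s) (h s)) t.
Proof.
 intros Hg Hh HF. apply eps_cpt. intros eps He. destruct (HF eps He) as [d [Hd H1]].
 destruct (cpt_eps _ _ Hg d Hd) as [d1 [Hd1 H2]]. destruct (cpt_eps _ _ Hh d Hd) as [d2 [Hd2 H3]].
 exists (Rmin d1 d2); split. apply Rmin_glb_lt; auto.
 intros y Hy. pose proof (Rmin_l d1 d2). pose proof (Rmin_r d1 d2). apply H1. apply H2; lra. apply H3; lra.
Qed.

Lemma near_lt g t K : continuity_pt g t -> g t < K ->
  exists d, 0 < d /\ forall s, Rabs (s - t) < d -> g s < K.
Proof.
 intros H HK. destruct (cpt_eps _ _ H (K - g t) ltac:(lra)) as [d [Hd H1]].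
 exists d; split; auto. intros s Hs. specialize (H1 s Hs). apply Rabs_def2 in H1. lra.
Qed.

Lemma near_gt g t K : continuity_pt g t -> K < g t ->
  exists d, 0 < d /\ forall s, Rabs (s - t) < d -> K < g s.
Proof.
 intros H HK. destruct (cpt_eps _ _ H (g t - K) ltac:(lra)) as [d [Hd H1]].
 exists d; split; auto. intros s Hs. specialize (H1 s Hs). apply Rabs_def2 in H1. lra.
Qed.

Definition hf (P B a e mu A c t : R) := P - B * exp (e * (A - c*t)) - a * exp (mu * (A - c * t)).
Definition hd (P B a e mu A c t : R) :=
  B * exp (e * (A - c*t)) * (e*c) + a * exp (mu * (A - c*t)) * (mu * c).

Module HD.
Import Coquelicot.Coquelicot.
Lemma hf_deriv P B a e mu A c t : derivable_pt_lim (hf P B a e mu A c) t (hd P B a e mu A c t).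
Proof. unfold hf, hd. apply is_derive_Reals. auto_derive. auto. unfold Rminus. ring. Qed.
End HD.
Definition hf_deriv := HD.hf_deriv.

Lemma hd_unique P B a e mu A c r1 r2 : c <> 0 -> 0 < a -> 0 < mu -> e < mu ->
  hd P B a e mu A c r1 = 0 -> hd P B a e mu A c r2 = 0 -> r1 = r2.
Proof.
 unfold hd. intros Hc Ha Hmu He H1 H2.
 set (u1 := A - c * r1) in *. set (u2 := A - c * r2) in *.
 assert (K1 : B * e * exp (e * u1) + a * mu * exp (mu * u1) = 0).
 { apply (Rmult_eq_reg_r c); auto. rewrite Rmult_0_l. rewrite <- H1. ring. }
 assert (K2 : B * e * exp (e * u2) + a * mu * exp (mu * u2) = 0).
 { apply (Rmult_eq_reg_r c); auto. rewrite Rmult_0_l. rewrite <- H2. ring. }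
 pose proof (exp_pos (mu * u1)). pose proof (exp_pos (mu * u2)).
 pose proof (exp_pos (e * u1)). pose proof (exp_pos (e * u2)).
 assert (HBe : B * e <> 0).
 { intro HB. rewrite HB in K1. assert (0 < a * mu * exp (mu * u1)).
   { apply Rmult_lt_0_compat; auto. apply Rmult_lt_0_compat; auto. } lra. }
 assert (E : exp (e * u1) * exp (mu * u2) = exp (e * u2) * exp (mu * u1)).
 { apply (Rmult_eq_reg_l (B * e)); auto.
   replace (B * e * (exp (e * u1) * exp (mu * u2))) with ((B * e * exp (e * u1)) * exp (mu * u2)) by ring.
   replace (B * e * (exp (e * u2) * exp (mu * u1))) with ((B * e * exp (e * u2)) * exp (mu * u1)) by ring.
   replace (B * e * exp (e * u1)) with (- (a * mu * exp (mu * u1))) by lra.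
   replace (B * e * exp (e * u2)) with (- (a * mu * exp (mu * u2))) by lra. ring. }
 rewrite <- !exp_plus in E. apply exp_inv in E.
 assert (Q1 : (mu - e) * (u2 - u1) = 0) by lra.
 apply Rmult_integral in Q1. destruct Q1 as [Q1|Q1]. lra.
 unfold u1, u2 in Q1. assert (Q2 : c * (r1 - r2) = 0) by lra.
 apply Rmult_integral in Q2. destruct Q2; [contradiction|lra].
Qed.

Lemma hf_three P B a e mu A c r1 r2 r3 : c <> 0 -> 0 < a -> 0 < mu -> e < mu ->
  hf P B a e mu A c r1 = 0 -> hf P B a e mu A c r2 = 0 -> hf P B a e mu A c r3 = 0 ->
  r1 = r2 \/ r1 = r3 \/ r2 = r3.
Proof.
 intros Hc Ha Hmu He.
 assert (Key : forall x y w, x < y < w -> hf P B a e mu A c x = 0 -> hf P B a e mu A c y = 0 ->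
     hf P B a e mu A c w = 0 -> False).
 { intros x y w [Hxy Hyw] Hx Hy Hw.
   destruct (MVT_cor2 _ _ x y Hxy (fun c0 _ => hf_deriv P B a e mu A c c0)) as [p1 [E1 P1]].
   destruct (MVT_cor2 _ _ y w Hyw (fun c0 _ => hf_deriv P B a e mu A c c0)) as [p2 [E2 P2]].
   rewrite Hx, Hy in E1. rewrite Hy, Hw in E2.
   assert (hd P B a e mu A c p1 = 0).
   { apply (Rmult_eq_reg_r (y - x)). lra. lra. }
   assert (hd P B a e mu A c p2 = 0).
   { apply (Rmult_eq_reg_r (w - y)). lra. lra. }
   pose proof (hd_unique P B a e mu A c p1 p2 Hc Ha Hmu He H H0). lra. }
 intros H1 H2 H3.
 destruct (Rtotal_order r1 r2) as [a12|[a12|a12]]; auto;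
 destruct (Rtotal_order r1 r3) as [a13|[a13|a13]]; auto;
 destruct (Rtotal_order r2 r3) as [a23|[a23|a23]]; auto; exfalso.
 all: first [ apply (Key r1 r2 r3); auto; lra
            | apply (Key r1 r3 r2); auto; lra
            | apply (Key r2 r1 r3); auto; lra
            | apply (Key r2 r3 r1); auto; lra
            | apply (Key r3 r1 r2); auto; lra
            | apply (Key r3 r2 r1); auto; lra
            | lra ].
Qed.

Lemma two_points (Z : R -> Prop) : (forall r1 r2 r3, Z r1 -> Z r2 -> Z r3 -> r1 = r2 \/ r1 = r3 \/ r2 = r3) ->
  exists t1 t2, forall t, Z t -> t = t1 \/ t = t2.
Proof.
 intros H. destruct (classic (exists t, Z t)) as [[t1 Ht1]|Hn].
 - destruct (classic (exists t, Z t /\ t <> t1)) as [[t2 [Ht2 Hne]]|Hn2].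
   + exists t1, t2. intros t Ht. destruct (H t1 t2 t Ht1 Ht2 Ht) as [E|[E|E]]; auto.
     congruence.
   + exists t1, t1. intros t Ht. left. apply NNPP. intro. apply Hn2. exists t; auto.
 - exists 0, 0. intros t Ht. exfalso. apply Hn. exists t; auto.
Qed.

Lemma sum_two (g : nat -> R) m : (forall j, (2 <= j)%nat -> g j = 0) -> 0 <= g 0%nat -> 0 <= g 1%nat ->
  sum_f_R0 g m <= g 0%nat + g 1%nat.
Proof.
 intros H0 Hg0 Hg1. induction m. simpl. lra.
 simpl. destruct m. simpl. lra. rewrite H0 by lia. lra.
Qed.

Lemma null_two (A : R -> Prop) t1 t2 : (forall t, A t -> t = t1 \/ t = t2) -> null_set A.
Proof.
 intros H eps He.
 exists (fun j => match j with O => t1 - eps/4 | 1%nat => t2 - eps/4 | _ => 0 end).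
 exists (fun j => match j with O => t1 + eps/4 | 1%nat => t2 + eps/4 | _ => 0 end).
 split; [|split].
 - intros [|[|j]]; lra.
 - intros t Ht. destruct (H t Ht) as [->| ->]. exists 0%nat; lra. exists 1%nat; lra.
 - intros m. eapply Rle_trans. apply sum_two.
   intros [|[|j]] Hj; [lia|lia|ring]. lra. lra. lra.
Qed.


Lemma contAt_plus n g h x : contAt n g x -> contAt n h x -> contAt n (fun y => g y + h y) x.
Proof. intros; apply (contAt_F2 n g h Rplus); auto; apply cont2_plus. Qed.
Lemma contAt_minus n g h x : contAt n g x -> contAt n h x -> contAt n (fun y => g y - h y) x.
Proof. intros; apply (contAt_F2 n g h Rminus); auto; apply cont2_minus. Qed.
Lemma contAt_mult n g h x : contAt n g x -> contAt n h x -> contAt n (fun y => g y * h y) x.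
Proof. intros; apply (contAt_F2 n g h Rmult); auto; apply cont2_mult. Qed.
Lemma contAt_max n g h x : contAt n g x -> contAt n h x -> contAt n (fun y => Rmax (g y) (h y)) x.
Proof. intros; apply (contAt_F2 n g h Rmax); auto; apply cont2_max. Qed.

Theorem proposition3p4
  (N : nat) (HN : (1 <= N)%nat)
  (k : Rn N -> R) (delta0 : R) (f : Rn N -> R -> R) (p : nat -> R)
  (xi : Rn N) (c mu mu1 mustar cstar : R) (phi phi1 phi0 : Rn N -> R)
  (d0 d1 b M : R)
  (* kernel k *)
  (Hk_C1 : C1fun N k) (Hdelta0 : 0 < delta0)
  (Hk_pos : forall x, vnorm N x < delta0 -> 0 < k x)
  (Hk_zero : forall x, delta0 <= vnorm N x -> k x = 0)
  (Hk_int : boxint N k (vzero N) delta0 = 1)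
  (* periodicity of f *)
  (Hp : forall i, (i < N)%nat -> 0 < p i)
  (Hf_per : forall i x u, (i < N)%nat ->
      f (vadd N x (vscale N (p i) (vbasis N i))) u = f x u)
  (* (H1) *)
  (H1 : exists F : Rn (S N) -> R,
      C1fun (S N) F /\ (forall x u, 0 <= u -> F (u, x) = f x u) /\
      exists kappa, 0 < kappa /\
        forall x u l, 0 <= u -> derivable_pt_lim (fun s => F (s, x)) u l -> l <= - kappa)
  (H1' : forall x, exists U, forall u, U <= u -> f x u < 0)
  (* (H2) *)
  (H2 : forall xi', dot N xi' xi' = 1 ->
      0 < lambda0 N p k delta0 (fun x => f x 0) xi' 0)
  (* (H3) *)
  (H3 : forall xi' m, dot N xi' xi' = 1 -> 0 <= m ->
      principal_eigenvalue N p k delta0 (fun x => f x 0) xi' m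
        (lambda0 N p k delta0 (fun x => f x 0) xi' m))
  (* (H4) *)
  (H4 : forall x u, u <= 0 -> f x u = f x 0)
  (* the known facts on c^*(xi) and mu^*(xi) *)
  (Hxi : dot N xi xi = 1)
  (Hcstar : is_glb (fun r => exists m, 0 < m /\
                 r = lambda0 N p k delta0 (fun x => f x 0) xi m / m) cstar)
  (Hmustar_pos : 0 < mustar)
  (Hmustar_eq : cstar = lambda0 N p k delta0 (fun x => f x 0) xi mustar / mustar)
  (Hmustar_lt : forall m, 0 < m < mustar ->
      cstar < lambda0 N p k delta0 (fun x => f x 0) xi m / m)
  (* data *)
  (Hc : cstar < c)
  (Hmu : 0 < mu < mustar)
  (Hmu_eq : lambda0 N p k delta0 (fun x => f x 0) xi mu = c * mu)
  (Hmu1 : mu < mu1 < Rmin (2 * mu) mustar)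
  (Hmu1_c : cstar < lambda0 N p k delta0 (fun x => f x 0) xi mu1 / mu1 < c)
  (Hphi : Xp N p phi /\ (forall x, 0 < phi x) /\
      (forall x, Lop N k delta0 (fun x => f x 0) xi mu phi x
                 = lambda0 N p k delta0 (fun x => f x 0) xi mu * phi x) /\
      is_lub (fun r => exists x, r = phi x) 1)
  (Hphi1 : Xp N p phi1 /\ (forall x, 0 < phi1 x) /\
      (forall x, Lop N k delta0 (fun x => f x 0) xi mu1 phi1 x
                 = lambda0 N p k delta0 (fun x => f x 0) xi mu1 * phi1 x) /\
      is_lub (fun r => exists x, r = phi1 x) 1)
  (Hphi0 : Xp N p phi0 /\ (forall x, 0 < phi0 x) /\
      (forall x, Lop N k delta0 (fun x => f x 0) xi 0 phi0 x
                 = lambda0 N p k delta0 (fun x => f x 0) xi 0 * phi0 x) /\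
      is_lub (fun r => exists x, r = phi0 x) 1)
  (* choice of d0, d1 *)
  (Hd0 : forall d, d0 <= d -> forall z T, 0 < T -> forall t x l,
      derivable_pt_lim (fun s => v1 N xi c mu mu1 d phi phi1 z T s x) t l ->
      l <= Ez_rhs N k delta0 f z (fun s y => v1 N xi c mu mu1 d phi phi1 z T s y) t x)
  (Hd1 : d0 <= d1)
  (* choice of b *)
  (Hb : 0 < b)
  (Hb_sub : forall x z,
      0 <= boxint N (fun y => k (vsub N y x) * (b * phi0 (vadd N y z))) x delta0
           - b * phi0 (vadd N x z)
           + f (vadd N x z) (b * phi0 (vadd N x z)) * (b * phi0 (vadd N x z)))
  (* choice of M *)
  (HM : 0 < M)
  (HM_b : forall z T t x, 0 < T ->
      M - 2 * delta0 <= svar N xi c T t x <= M ->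
      b <= v1 N xi c mu mu1 d1 phi phi1 z T t x) :
  forall z T, 0 < T ->
    subsolution N k delta0 f z (fun t x => ulow N xi c mu mu1 d1 b M phi phi1 phi0 z T t x).
Proof.
 intros z T HT.
 destruct Hphi as [[Hphic _] [Hphipos _]].
 destruct Hphi1 as [[Hphi1c _] [Hphi1pos _]].
 destruct Hphi0 as [[Hphi0c _] [Hphi0pos [_ [Hub0 _]]]].
 assert (Hphi0le : forall y, phi0 y <= 1) by (intro y; apply Hub0; exists y; reflexivity).
 assert (Hkc : contRn N k) by (destruct Hk_C1 as [dg [Q1 Q2]]; eapply C1_cont; eauto).
 assert (Hk0 : forall w, 0 <= k w).
 { intro w; destruct (Rlt_le_dec (vnorm N w) delta0) as [h|h]; [left; auto | right; symmetry; auto]. }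
 assert (Hxi1 : vnorm N xi = 1) by (unfold vnorm; rewrite Hxi; apply sqrt_1).
 assert (Hdotb : forall w, Rabs (dot N w xi) <= vnorm N w).
 { intro w; eapply Rle_trans; [apply CS|]. rewrite Hxi1; lra. }
 assert (Hsvd : forall t y x, svar N xi c T t y - svar N xi c T t x = dot N (vsub N y x) xi).
 { intros; unfold svar; rewrite dot_sub; ring. }
 assert (Hsvn : forall t y x, Rabs (svar N xi c T t y - svar N xi c T t x) <= vnorm N (vsub N y x)).
 { intros; rewrite Hsvd; apply Hdotb. }
 set (U := fun t y => ulow N xi c mu mu1 d1 b M phi phi1 phi0 z T t y).
 set (V := fun t y => v1 N xi c mu mu1 d1 phi phi1 z T t y).
 assert (HUV : forall t y, M - 2*delta0 <= svar N xi c T t y -> U t y = V t y).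
 { intros t y Hs. unfold U, V, ulow. destruct (Rlt_dec _ M) as [h|h].
   - apply Rmax_right. eapply Rle_trans; [|apply HM_b; auto; lra].
     pose proof (Hphi0le (vadd N y z)). nra.
   - reflexivity. }
 assert (HUgeV : forall t y, V t y <= U t y).
 { intros t y. unfold U, V, ulow. destruct (Rlt_dec _ M); [apply Rmax_r | lra]. }
 assert (HUmax : forall t y, svar N xi c T t y < M -> U t y = Rmax (b * phi0 (vadd N y z)) (V t y)).
 { intros t y Hs. unfold U, V, ulow. destruct (Rlt_dec _ M); [reflexivity | contradiction]. }
 assert (HUgeb : forall t y, svar N xi c T t y < M -> b * phi0 (vadd N y z) <= U t y).
 { intros t y Hs. rewrite HUmax by auto. apply Rmax_l. }
 assert (Hsvc : forall t y0, contAt N (fun y => svar N xi c T t y) y0).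
 { intros t y0. unfold svar. apply contAt_minus. apply contAt_plus. apply contAt_dot.
   apply contAt_const. apply contAt_const. }
 assert (HVc : forall t, contRn N (fun y => V t y)).
 { intros t; apply contRn_At; intros y0. unfold V, v1. apply contAt_minus.
   - apply contAt_mult.
     + apply (contAt_comp N exp (fun y => - mu * svar N xi c T t y)).
       apply derivable_continuous_pt, derivable_pt_exp.
       apply contAt_mult. apply contAt_const. apply Hsvc.
     + apply contAt_transl. exact (Hphic _).
   - apply contAt_mult. apply contAt_mult. apply contAt_const.
     + apply (contAt_comp N exp (fun y => - mu1 * svar N xi c T t y)).
       apply derivable_continuous_pt, derivable_pt_exp.
       apply contAt_mult. apply contAt_const. apply Hsvc.
     + apply contAt_transl. exact (Hphi1c _). }
 assert (Hbc : contRn N (fun y => b * phi0 (vadd N y z))).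
 { apply contRn_At; intros y0. apply contAt_mult. apply contAt_const. apply contAt_transl. exact (Hphi0c _). }
 assert (HUc : forall t, contRn N (fun y => U t y)).
 { intros t; apply contRn_At; intros y0. destruct (Rlt_le_dec (svar N xi c T t y0) M) as [h|h].
   - apply contAt_local with (h := fun y => Rmax (b * phi0 (vadd N y z)) (V t y))
       (d := M - svar N xi c T t y0). lra.
     intros y Hy. apply HUmax. pose proof (Hsvn t y y0). pose proof (Rle_abs (svar N xi c T t y - svar N xi c T t y0)). lra.
     apply contAt_max. exact (Hbc _). exact (HVc t _).
   - apply contAt_local with (h := fun y => V t y) (d := 2 * delta0). lra.
     intros y Hy. apply HUV. pose proof (Hsvn t y y0). pose proof (Rle_abs (svar N xi c T t y0 - svar N xi c T t y)).
     rewrite Rabs_minus_sym in H. lra.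
     exact (HVc t _). }
 assert (Hint : forall x W, contRn N W -> contRn N (fun y => k (vsub N y x) * W y)).
 { intros x W HW; apply contRn_At; intros y0. apply contAt_mult. apply contAt_shift. exact (Hkc _). exact (HW _). }
 assert (HEz : forall t x, U t x = V t x -> Ez_rhs N k delta0 f z V t x <= Ez_rhs N k delta0 f z U t x).
 { intros t x E. unfold Ez_rhs. rewrite E.
   assert (boxint N (fun y => k (vsub N y x) * V t y) x delta0 <= boxint N (fun y => k (vsub N y x) * U t y) x delta0).
   { apply mono. lra. apply Hint, HVc. apply Hint, HUc. intros y. apply Rmult_le_compat_l; auto. }
   lra. }
 assert (HEzb : forall t x, svar N xi c T t x < M - 2 * delta0 -> U t x = b * phi0 (vadd N x z) ->
   0 <= Ez_rhs N k delta0 f z U t x).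
 { intros t x Hs E. unfold Ez_rhs. rewrite E.
   assert (boxint N (fun y => k (vsub N y x) * (b * phi0 (vadd N y z))) x delta0
       <= boxint N (fun y => k (vsub N y x) * U t y) x delta0).
   { apply mono. lra. apply Hint, Hbc. apply Hint, HUc. intros y.
     destruct (Rlt_le_dec (vnorm N (vsub N y x)) delta0) as [h|h].
     - apply Rmult_le_compat_l; auto. apply HUgeb. pose proof (Hsvn t y x). pose proof (Rle_abs (svar N xi c T t y - svar N xi c T t x)). lra.
     - rewrite Hk_zero by auto. lra. }
   pose proof (Hb_sub x z).
   rewrite (Rmult_comm (b * phi0 (vadd N x z)) (f (vadd N x z) (b * phi0 (vadd N x z)))). lra. }
 intros x. set (a := b * phi0 (vadd N x z)).
 assert (Hsv_der : forall t, derivable_pt (fun s => svar N xi c T s x) t).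
 { intros t. unfold svar. reg. }
 assert (Hsv_cont : forall t, continuity_pt (fun s => svar N xi c T s x) t).
 { intros t. apply derivable_continuous_pt, Hsv_der. }
 assert (HV_der : forall t, exists l, derivable_pt_lim (fun s => V s x) t l).
 { intros t. assert (D : derivable_pt (fun s => V s x) t) by (unfold V, v1, svar; reg).
   destruct D as [l Hl]. exists l; exact Hl. }
 assert (HV_cont : forall t, continuity_pt (fun s => V s x) t).
 { intros t. destruct (HV_der t) as [l Hl]. apply derivable_continuous_pt. exists l; exact Hl. }
 split; [|split].
 -
   intros t. destruct (Rlt_le_dec (svar N xi c T t x) M) as [h|h].
   + destruct (near_lt _ t M (Hsv_cont t) h) as [d [Hd Q1]].
     apply cpt_local with (g := fun s => Rmax a (V s x)).
     { exists d; split; [exact Hd|]. intros s Hs. apply HUmax. apply Q1; auto. }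
     apply (cpt_F2 (fun _ => a) (fun s => V s x) Rmax). apply continuity_pt_const. intros u v; reflexivity.
     apply HV_cont. apply cont2_max.
   + destruct (near_gt _ t (M - 2 * delta0) (Hsv_cont t) ltac:(lra)) as [d [Hd Q1]].
     apply cpt_local with (g := fun s => V s x).
     { exists d; split; [exact Hd|]. intros s Hs. apply HUV. left. apply Q1; auto. }
     apply HV_cont.
 -
   destruct (Req_dec c 0) as [Hc0|Hc0].
   + apply (null_two _ 0 0). intros t Hnd. exfalso. apply Hnd.
     exists 0. apply deriv_local with (g := fun _ => U 0 x).
     { exists 1; split; [lra|]. intros s _. unfold U, ulow, v1, svar. rewrite Hc0. rewrite !Rmult_0_l. reflexivity. }
     apply derivable_pt_lim_const.
   + set (Pp := phi (vadd N x z)). set (Bq := d1 * phi1 (vadd N x z)). set (A := dot N x xi + c * T).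
     assert (Ha : 0 < a) by (unfold a; apply Rmult_lt_0_compat; auto).
     assert (Hz : forall t, V t x = a -> hf Pp Bq a (mu - mu1) mu A c t = 0).
     { intros t Ht.
       assert (Id : V t x - a = exp (- mu * svar N xi c T t x) * hf Pp Bq a (mu - mu1) mu A c t).
       { unfold V, v1, hf, Pp, Bq, A. unfold svar. set (u := dot N x xi + c*T - c*t).
         assert (e1 : exp (- mu * u) * exp ((mu - mu1) * u) = exp (- mu1 * u)) by (rewrite <- exp_plus; f_equal; ring).
         assert (e2 : exp (- mu * u) * exp (mu * u) = 1).
         { rewrite <- exp_plus. replace (- mu * u + mu * u) with 0 by ring. apply exp_0. }
         transitivity (exp (- mu * u) * phi (vadd N x z) - d1 * (exp (- mu * u) * exp ((mu - mu1) * u)) * phi1 (vadd N x z)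
            - a * (exp (- mu * u) * exp (mu * u))).
         rewrite e1, e2. ring. ring. }
       rewrite Ht in Id. replace (a - a) with 0 in Id by ring. symmetry in Id.
       apply Rmult_integral in Id. destruct Id as [Id|Id]; auto.
       pose proof (exp_pos (- mu * svar N xi c T t x)). lra. }
     assert (H3pt : forall r1 r2 r3, V r1 x = a -> V r2 x = a -> V r3 x = a -> r1 = r2 \/ r1 = r3 \/ r2 = r3).
     { intros r1 r2 r3 E1 E2 E3. apply (hf_three Pp Bq a (mu - mu1) mu A c); auto; lra. }
     destruct (two_points _ H3pt) as [t1 [t2 Ht12]].
     apply (null_two _ t1 t2). intros t Hnd. apply Ht12. apply NNPP. intro NE. apply Hnd.
     destruct (Rlt_le_dec (M - 2*delta0) (svar N xi c T t x)) as [h|h].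
     * destruct (near_gt _ t _ (Hsv_cont t) h) as [d [Hd Q1]]. destruct (HV_der t) as [l Hl]. exists l.
       apply deriv_local with (g := fun s => V s x); [|exact Hl].
       exists d; split; [exact Hd|]. intros s Hs. apply HUV. left. apply Q1; auto.
     * destruct (near_lt _ t M (Hsv_cont t) ltac:(lra)) as [d [Hd Q1]].
       destruct (Rlt_le_dec a (V t x)) as [h2|h2].
       -- destruct (near_gt _ t a (HV_cont t) h2) as [d2 [Hd2 Q2]]. destruct (HV_der t) as [l Hl]. exists l.
          apply deriv_local with (g := fun s => V s x); [|exact Hl].
          exists (Rmin d d2); split. apply Rmin_glb_lt; auto.
          intros s Hs. pose proof (Rmin_l d d2). pose proof (Rmin_r d d2).
          rewrite HUmax by (apply Q1; lra). apply Rmax_right. left. apply Q2. lra.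
       -- assert (h3 : V t x < a) by (destruct h2 as [h2|h2]; [auto | contradiction]).
          destruct (near_lt _ t a (HV_cont t) h3) as [d2 [Hd2 Q2]]. exists 0.
          apply deriv_local with (g := fun _ => a); [|apply derivable_pt_lim_const].
          exists (Rmin d d2); split. apply Rmin_glb_lt; auto.
          intros s Hs. pose proof (Rmin_l d d2). pose proof (Rmin_r d d2).
          rewrite HUmax by (apply Q1; lra). apply Rmax_left. left. apply Q2. lra.
 -
   intros t l Hl. destruct (Req_dec (U t x) (V t x)) as [E|NE].
   + destruct (HV_der t) as [lV HlV].
     assert (l = lV).
     { apply (local_min_deriv _ _ t l lV Hl HlV E). exists 1; split. lra. intros; apply HUgeV. }
     subst l. eapply Rle_trans; [apply (Hd0 d1 Hd1 z T HT t x lV HlV)|]. apply HEz; auto.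
   + assert (Hs : svar N xi c T t x < M - 2 * delta0).
     { destruct (Rlt_le_dec (svar N xi c T t x) (M - 2 * delta0)) as [h|h]; auto.
       exfalso. apply NE. apply HUV; auto. }
     assert (Ea : U t x = a).
     { rewrite HUmax in NE |- * by lra. unfold Rmax in *. destruct (Rle_dec _ _); [contradiction|reflexivity]. }
     assert (l = 0).
     { apply (local_min_deriv _ (fun _ => a) t l 0 Hl (derivable_pt_lim_const a t) Ea).
       destruct (near_lt _ t M (Hsv_cont t) ltac:(lra)) as [d [Hd Q1]].
       exists d; split; auto. intros s Hs'. apply HUgeb. apply Q1; auto. }
     subst l. apply HEzb; auto.
Qed.
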